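(* Let $(N,\langle\cdot,\cdot\rangle)$ be a 2-step nilpotent Lie group with a left-invariant Riemannian metric and Lie algebra $\mathfrak n$. Suppose that either $\mathfrak n$ is non-singular, or $\mathfrak n$ has no Euclidean factor (i.e. $\ker j=\{0\}$) and is almost non-singular. Then every left-invariant skew-symmetric $(1,1)$-tensor $F$ on $N$ of type I whose associated 2-form $\omega=\langle F\cdot,\cdot\rangle$ is closed and which is parallel ($\nabla F=0$, $\nabla$ the Levi-Civita connection) is identically zero.
   Context: A real Lie algebra is 2-step nilpotent if $[[U,V],W]=0$ for all $U,V,W$. Let $\mathfrak z$ be the center, $\mathfrak v=\mathfrak z^\perp$, and for $Z\in\mathfrak z$ define $j_Z:\mathfrak v\to\mathfrak v$ by $\langle j_ZV,W\rangle=\langle Z,[V,W]\rangle$; $j:\mathfrak z\to\mathfrak{so}(\mathfrak v)$ is linear with kernel $\ker j$. $\mathfrak n$ is non-singular if $\mathrm{ad}(X):\mathfrak n\to\mathfrak z$ is onto for every $X\notin\mathfrak z$ (equivalently $j_Z$ is invertible for every $Z\neq0$); it is almost non-singular if there exist $Z,\tilde Z\in\mathfrak z$ with $j_Z$ invertible and $j_{\tilde Z}$ singular. $F$ (identified with a skew-symmetric endomorphism of $\mathfrak n$) is of type I if $F(\mathfrak v)\subseteq\mathfrak v$ and $F(\mathfrak z)\subseteq\mathfrak z$. Closedness of a left-invariant 2-form means $\omega([U,V],W)+\omega([V,W],U)+\omega([W,U],V)=0$ for all $U,V,W\in\mathfrak n$. *)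

(* Defs.v *)
(* A metric 2-step nilpotent Lie algebra (n, <.,.>) is modelled,
   after choosing an orthonormal basis, as R^n (row vectors) with the standard
   inner product and a bracket given by structure constants c i j k. *)
From HB Require Import structures.
From mathcomp Require Import all_boot all_order all_algebra.
Set Implicit Arguments. Unset Strict Implicit. Unset Printing Implicit Defensive.
Import Order.TTheory GRing.Theory Num.Theory.
Local Open Scope ring_scope.

Section Defs.
Variables (R : realFieldType) (n : nat).
Variable c : 'I_n -> 'I_n -> 'I_n -> R.
Local Notation vec := 'rV[R]_n.

Definition ip (u v : vec) : R := \sum_(i < n) u 0 i * v 0 i.

Definition e (i : 'I_n) : vec := delta_mx 0 i.

Definition br (u v : vec) : vec :=
  \row_k \sum_(i < n) \sum_(j < n) c i j k * u 0 i * v 0 j.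

Definition skew_bracket : Prop := forall u v, br u v = - br v u.

Definition two_step_nilpotent : Prop :=
  skew_bracket /\ (forall u v w, br (br u v) w = 0) /\ (exists u v, br u v != 0).

Definition in_z (Z : vec) : Prop := forall X, br Z X = 0.
Definition in_v (V : vec) : Prop := forall Z, in_z Z -> ip V Z = 0.

(* j_Z V : the unique vector with <j_Z V, W> = <Z, [V,W]> for all W in n
   (equivalently for all W in v, since [V,W] = 0 for W in z); it lies in v. *)
Definition jmap (Z V : vec) : vec := \row_k ip Z (br V (e k)).

Definition j_invertible (Z : vec) : Prop :=
  (forall V, in_v V -> jmap Z V = 0 -> V = 0) /\
  (forall W, in_v W -> exists2 V, in_v V & jmap Z V = W).

Definition nonsingular : Prop :=
  forall X, ~ in_z X -> forall Z, in_z Z -> exists Y, br X Y = Z.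

Definition almost_nonsingular : Prop :=
  exists Z, exists Z', [/\ in_z Z, in_z Z', j_invertible Z & ~ j_invertible Z'].

Definition no_euclidean_factor : Prop :=
  forall Z, in_z Z -> (forall V, in_v V -> jmap Z V = 0) -> Z = 0.

Definition app (F : 'M[R]_n) (u : vec) : vec := u *m F.

Definition skew_symmetric (F : 'M[R]_n) : Prop :=
  forall u v, ip (app F u) v = - ip u (app F v).

Definition typeI (F : 'M[R]_n) : Prop :=
  (forall V, in_v V -> in_v (app F V)) /\ (forall Z, in_z Z -> in_z (app F Z)).

Definition omega (F : 'M[R]_n) (u v : vec) : R := ip (app F u) v.

Definition closed_form (F : 'M[R]_n) : Prop :=
  forall U V W, omega F (br U V) W + omega F (br V W) U + omega F (br W U) V = 0.

(* Levi-Civita connection on left-invariant fields (Koszul formula):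
   <nabla_X Y, Z> = 1/2 (<[X,Y],Z> - <[Y,Z],X> + <[Z,X],Y>) *)
Definition nabla (X Y : vec) : vec :=
  \row_k (2%:R^-1 * (ip (br X Y) (e k) - ip (br Y (e k)) X + ip (br (e k) X) Y)).

(* nabla F = 0 : (nabla_X F) Y = nabla_X (F Y) - F (nabla_X Y) = 0 *)
Definition parallel (F : 'M[R]_n) : Prop :=
  forall X Y, nabla X (app F Y) = app F (nabla X Y).

End Defs.

(* Main.v *)
Require Import Defs.
From HB Require Import structures.
From mathcomp Require Import all_boot all_order all_algebra.
Import Order.TTheory GRing.Theory Num.Theory.
Local Open Scope ring_scope.

Section H.
Context {R : realFieldType} {n : nat} (c : 'I_n -> 'I_n -> 'I_n -> R).
Local Notation vec := 'rV[R]_n.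

Lemma ip_self0 (w : vec) : ip w w = 0 -> w = 0.
Proof.
move=> h; apply/rowP => i; rewrite mxE.
have := @psumr_eq0P R _ predT (fun i => w 0 i * w 0 i) (fun i _ => ltac:(simpl; rewrite -expr2; exact: sqr_ge0)) h i isT.
by move/eqP; rewrite mulf_eq0 orbb => /eqP.
Qed.

Lemma ipC (u v : vec) : ip u v = ip v u.
Proof. by apply: eq_bigr => i _; rewrite mulrC. Qed.

Lemma ip0r (u : vec) : ip u 0 = 0.
Proof. by rewrite /ip big1 // => i _; rewrite mxE mulr0. Qed.

Lemma ip0l (u : vec) : ip 0 u = 0.
Proof. by rewrite ipC ip0r. Qed.

Lemma ipE (u v : vec) : ip u v = (u *m v^T) 0 0.
Proof. by rewrite /ip mxE; apply: eq_bigr => i _; rewrite mxE. Qed.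

Lemma ip_e (w : vec) k : ip w (e R k) = w 0 k.
Proof.
rewrite /ip (bigD1 k) //= big1 => [|i /negbTE ne].
  by rewrite /e mxE !eqxx mulr1 addr0.
by rewrite /e mxE ne andbF mulr0.
Qed.

Lemma brDr (u a b : vec) : br c u (a + b) = br c u a + br c u b.
Proof.
apply/rowP => k; rewrite !mxE -big_split; apply: eq_bigr => i _.
rewrite -big_split; apply: eq_bigr => j _; by rewrite mxE mulrDr.
Qed.

Lemma br0r (u : vec) : br c u 0 = 0.
Proof.
apply/rowP => k; rewrite !mxE big1 // => i _; rewrite big1 // => j _.
by rewrite mxE mulr0.
Qed.


Definition Cj (j : 'I_n) : 'M[R]_n := \matrix_(i, k) c i j k.

Lemma brE (Z X : vec) k : br c Z X 0 k = ip (\row_j (Z *m Cj j) 0 k) X.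
Proof.
rewrite /ip mxE exchange_big; apply: eq_bigr => j _; rewrite !mxE mulr_suml.
by apply: eq_bigr => i _; rewrite mxE (mulrC (Z 0 i)).
Qed.

Lemma in_zE (Z : vec) : in_z c Z <-> forall j, Z *m Cj j = 0.
Proof.
split=> [h j|h X].
  apply/rowP => k; have := congr1 (fun M : vec => M 0 k) (h (e R j)).
  by rewrite /= brE ip_e !mxE.
apply/rowP => k; rewrite brE mxE /ip big1 // => j _; by rewrite mxE h mxE mul0r.
Qed.

Definition Zs : 'M[R]_n := (\bigcap_(j < n) kermx (Cj j))%MS.
Definition Ks : 'M[R]_n := kermx Zs^T.

Lemma in_zS (Z : vec) : in_z c Z <-> (Z <= Zs)%MS.
Proof.
split=> [/in_zE h|/sub_bigcapmxP h].
  by apply/sub_bigcapmxP => j _; rewrite sub_kermx h.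
by apply/in_zE => j; apply/eqP; rewrite -sub_kermx; apply: h.
Qed.

Lemma in_vS (V : vec) : (V <= Ks)%MS -> in_v c V.
Proof.
rewrite /Ks sub_kermx => /eqP h Z /in_zS /submxP [D ->].
by rewrite ipE trmx_mul mulmxA h mul0mx mxE.
Qed.

Lemma capZK : (Zs :&: Ks)%MS = 0.
Proof.
apply/row_matrixP => i; rewrite row0.
have : (row i (Zs :&: Ks) <= Zs :&: Ks)%MS by apply: row_sub.
rewrite sub_capmx => /andP [/in_zS hz /in_vS hv].
by apply: ip_self0; apply: hv.
Qed.

Lemma decomp (Y : vec) : exists Yv Yz, [/\ in_v c Yv, in_z c Yz & Y = Yv + Yz].
Proof.
have hr : \rank (Zs + Ks)%MS = n.
  have := mxrank_sum_cap Zs Ks; rewrite capZK mxrank0 addn0 /Ks mxrank_ker mxrank_tr.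
  by move=> ->; rewrite subnKC // rank_leq_col.
have : (Y <= Zs + Ks)%MS by apply: submx_full; rewrite /row_full hr.
case/sub_addsmxP => u ->; exists (u.2 *m Ks), (u.1 *m Zs); split.
- by apply: in_vS; apply: submxMl.
- by apply/in_zS; apply: submxMl.
- by rewrite addrC.
Qed.

End H.

Theorem mainTheorem5 (R : realFieldType) (n : nat)
  (c : 'I_n -> 'I_n -> 'I_n -> R) (F : 'M[R]_n) :
  two_step_nilpotent c ->
  (nonsingular c \/ (no_euclidean_factor c /\ almost_nonsingular c)) ->
  skew_symmetric F -> typeI c F -> closed_form c F -> parallel c F ->
  F = 0.
Proof.
move=> [skew [nil [u0 [v0 nz]]]] hyp Fskew [tv tz] cl par.
have brz U V : in_z c (br c U V) by move=> X; apply: nil.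
have zbr Z X : in_z c Z -> br c X Z = 0 by move=> h; rewrite skew h oppr0.
have Fbr U V : br c U V *m F = 0.
  have hW : in_z c (br c U V *m F) by apply: tz (brz U V).
  have := cl U V (br c U V *m F); rewrite /omega /app.
  rewrite (zbr _ V hW) (hW U) !mul0mx !ip0l !addr0 => h.
  exact: ip_self0 h.
have nab X Y : in_v c X -> in_v c Y -> nabla c X Y = 2%:R^-1 *: br c X Y.
  move=> hX hY; apply/rowP => k; rewrite mxE [in RHS]mxE ip_e.
  rewrite (ipC (br c Y (e R k)) X) (hX _ (brz _ _)) (ipC (br c (e R k) X) Y).
  by rewrite (hY _ (brz _ _)) subr0 addr0 mxE.
have two0 : (2%:R : R) != 0 by rewrite pnatr_eq0.
have brFv X Y : in_v c X -> in_v c Y -> br c X (Y *m F) = 0.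
  move=> hX hY; have := par X Y; rewrite /app (nab _ _ hX (tv _ hY)) (nab _ _ hX hY).
  rewrite -scalemxAl Fbr scaler0 => h.
  by rewrite -[br c X _]scale1r -(mulfV two0) -scalerA h scaler0.
have Fv V : in_v c V -> V *m F = 0.
  move=> hV; have hW : in_z c (V *m F).
    move=> X; have [Xv [Xz [hXv hXz ->]]] := decomp c X.
    rewrite brDr (zbr _ _ hXz) addr0 skew.
    by rewrite (brFv _ _ hXv hV) oppr0.
  by apply: ip_self0; apply: (tv _ hV).
have Fz Z : in_z c Z -> Z *m F = 0.
  move=> hZ; have hW : in_z c (Z *m F) by apply: tz.
  have ipW A B : ip (Z *m F) (br c A B) = 0.
    by have := Fskew Z (br c A B); rewrite /app Fbr ip0r oppr0.
  case: hyp => [ns | [ne _]].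
    have nu : ~ in_z c u0 by move=> h; move: nz; rewrite h eqxx.
    have [Y hY] := ns u0 nu _ hW.
    by apply: ip_self0; rewrite -{2}hY ipW.
  apply: ne => // V _; apply/rowP => k; by rewrite !mxE ipW.
apply/row_matrixP => i; rewrite row0 rowE.
have [Xv [Xz [hXv hXz ->]]] := decomp c (delta_mx 0 i).
by rewrite mulmxDl Fv // Fz // addr0.
Qed.
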